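(* ($\mathrm{ZFCU}_R$) Let $\mathcal{I}$ be an $\mathcal{A}$-ideal and let $U^{\mathcal{I}}=\{x: ker(x)\in\mathcal{I}\}$. Then $U^{\mathcal{I}}\models\mathrm{ZFCU}_R+$ ''$\mathcal{A}$ is a proper class''.
   Context: $\mathrm{ZFCU}_R$ is ZFC with urelements (language $\{\in,\mathcal{A}\}$, $\mathcal{A}$ the urelement predicate), formulated with Replacement rather than Collection, with AC. $ker(x)$ is the set of urelements in the transitive closure of $\{x\}$ (so $ker(a)=\{a\}$ for a urelement $a$). An $\mathcal{A}$-ideal is a (definable) class $\mathcal{I}$ of sets of urelements such that: if the class $\mathcal{A}$ of all urelements is a set then $\mathcal{A}\notin\mathcal{I}$; $\mathcal{I}$ is closed under finite unions and subsets; and $\{a\}\in\mathcal{I}$ for every urelement $a$. ''$\mathcal{A}$ is a proper class'' means no set contains exactly the urelements. *)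

(* Defs.v *)
(* A "class structure" is (M, D, mem, ur): a carrier
   type M, a domain predicate D (the class over which quantifiers range),
   the membership relation mem and the urelement predicate ur. *)

(* First-order formulas in the language {∈, A} (with equality), de Bruijn
   variables: FAll/FEx bind variable 0 and shift the others. *)
Inductive form : Type :=
| FMem : nat -> nat -> form
| FUr  : nat -> form
| FEq  : nat -> nat -> form
| FBot : form
| FImp : form -> form -> form
| FAnd : form -> form -> form
| FOr  : form -> form -> form
| FAll : form -> form
| FEx  : form -> form.

Definition scons {M : Type} (x : M) (e : nat -> M) : nat -> M :=
  fun n => match n with 0 => x | S n => e n end.

Section Semantics.
Variables (M : Type) (D : M -> Prop) (mem : M -> M -> Prop) (ur : M -> Prop).

Fixpoint sat (e : nat -> M) (p : form) : Prop :=
  match p with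
  | FMem i j => mem (e i) (e j)
  | FUr i => ur (e i)
  | FEq i j => e i = e j
  | FBot => False
  | FImp p q => sat e p -> sat e q
  | FAnd p q => sat e p /\ sat e q
  | FOr p q => sat e p \/ sat e q
  | FAll p => forall x, D x -> sat (scons x e) p
  | FEx p => exists x, D x /\ sat (scons x e) p
  end.

Definition isset (x : M) : Prop := ~ ur x.

Definition env_in (e : nat -> M) : Prop := forall n, D (e n).

(* The axioms of ZFCU_R (ZFC with urelements, Replacement instead of
   Collection, with AC), relativized to D.  The finitely many non-schematic
   axioms are written out as what their satisfaction unfolds to; the two
   schemas quantify over all formulas and all parameter assignments in D. *)
Definition ax_urelements : Prop :=
  forall a, D a -> ur a -> forall z, D z -> ~ mem z a.

Definition ax_extensionality : Prop :=
  forall x y, D x -> D y -> isset x -> isset y ->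
    (forall z, D z -> (mem z x <-> mem z y)) -> x = y.

Definition ax_foundation : Prop :=
  forall x, D x -> (exists y, D y /\ mem y x) ->
    exists y, D y /\ mem y x /\ (forall z, D z -> mem z y -> ~ mem z x).

Definition ax_pairing : Prop :=
  forall x y, D x -> D y -> exists p, D p /\ isset p /\
    (forall z, D z -> (mem z p <-> z = x \/ z = y)).

Definition ax_union : Prop :=
  forall x, D x -> exists u, D u /\ isset u /\
    (forall z, D z -> (mem z u <-> exists y, D y /\ mem y x /\ mem z y)).

Definition ax_powerset : Prop :=
  forall x, D x -> exists p, D p /\ isset p /\
    (forall y, D y -> (mem y p <-> (isset y /\ forall z, D z -> mem z y -> mem z x))).

Definition ax_infinity : Prop :=
  exists w, D w /\ isset w /\
    (exists o, D o /\ isset o /\ (forall z, D z -> ~ mem z o) /\ mem o w) /\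
    (forall x, D x -> mem x w ->
       exists s, D s /\ mem s w /\ isset s /\
         (forall z, D z -> (mem z s <-> mem z x \/ z = x))).

Definition ax_separation : Prop :=
  forall (phi : form) (e : nat -> M), env_in e ->
  forall x, D x -> exists y, D y /\ isset y /\
    (forall z, D z -> (mem z y <-> mem z x /\ sat (scons z e) phi)).

(* Replacement: for phi(v, u, params) (v = var 0, u = var 1), if phi is
   functional on x then the image of x exists. *)
Definition ax_replacement : Prop :=
  forall (phi : form) (e : nat -> M), env_in e ->
  forall x, D x ->
    (forall u, D u -> mem u x ->
       exists v, D v /\ sat (scons v (scons u e)) phi /\
         (forall v', D v' -> sat (scons v' (scons u e)) phi -> v' = v)) ->
    exists y, D y /\ isset y /\
      (forall v, D v -> (mem v y <->
         exists u, D u /\ mem u x /\ sat (scons v (scons u e)) phi)).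

Definition ax_choice : Prop :=
  forall x, D x ->
    (forall y, D y -> mem y x -> isset y /\ exists z, D z /\ mem z y) ->
    (forall y y', D y -> D y' -> mem y x -> mem y' x -> y <> y' ->
       forall z, D z -> mem z y -> ~ mem z y') ->
    exists s, D s /\ isset s /\
      (forall y, D y -> mem y x ->
         exists c, D c /\ mem c y /\ mem c s /\
           (forall c', D c' -> mem c' y -> mem c' s -> c' = c)).

Definition ZFCU_R : Prop :=
  ax_urelements /\ ax_extensionality /\ ax_foundation /\ ax_pairing /\
  ax_union /\ ax_powerset /\ ax_infinity /\ ax_separation /\
  ax_replacement /\ ax_choice.

Definition A_proper_class : Prop :=
  ~ exists s, D s /\ isset s /\ (forall z, D z -> (mem z s <-> ur z)).

End Semantics.

(* Notions inside the ambient universe (M, mem, ur), where every object exists. *)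
Section Ambient.
Variables (M : Type) (mem : M -> M -> Prop) (ur : M -> Prop).

Definition transitive (t : M) : Prop :=
  ~ ur t /\ forall y z, mem y t -> mem z y -> mem z t.

Definition in_TC_singleton (a x : M) : Prop :=
  forall t, transitive t -> mem x t -> mem a t.

Definition is_ker (x k : M) : Prop :=
  ~ ur k /\ forall a, mem a k <-> (ur a /\ in_TC_singleton a x).

Definition is_A_ideal (I : M -> Prop) : Prop :=
  (forall x, I x -> ~ ur x /\ forall z, mem z x -> ur z) /\
  (forall s, ~ ur s -> (forall z, mem z s <-> ur z) -> ~ I s) /\
  (forall o, ~ ur o -> (forall z, ~ mem z o) -> I o) /\
  (forall x y u, I x -> I y -> ~ ur u ->
     (forall z, mem z u <-> mem z x \/ mem z y) -> I u) /\
  (forall x y, I x -> ~ ur y -> (forall z, mem z y -> mem z x) -> I y) /\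
  (forall a s, ur a -> ~ ur s -> (forall z, mem z s <-> z = a) -> I s).

Definition U_ideal (I : M -> Prop) (x : M) : Prop :=
  exists k, is_ker x k /\ I k.

End Ambient.

Definition defined_class {M : Type} (mem : M -> M -> Prop) (ur : M -> Prop)
  (phi : form) (e : nat -> M) : M -> Prop :=
  fun k => sat M (fun _ => True) mem ur (scons k e) phi.

(* Main.v *)
Require Import Defs.
From Stdlib Require Import Classical ClassicalEpsilon FunctionalExtensionality Lia PeanoNat.

Definition upr (r : nat -> nat) : nat -> nat :=
  fun n => match n with 0 => 0 | S n => S (r n) end.

Fixpoint ren (r : nat -> nat) (p : form) : form :=
  match p with
  | FMem i j => FMem (r i) (r j)
  | FUr i => FUr (r i)
  | FEq i j => FEq (r i) (r j)
  | FBot => FBot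
  | FImp p q => FImp (ren r p) (ren r q)
  | FAnd p q => FAnd (ren r p) (ren r q)
  | FOr p q => FOr (ren r p) (ren r q)
  | FAll p => FAll (ren (upr r) p)
  | FEx p => FEx (ren (upr r) p)
  end.

Lemma scons_upr {M} (x : M) (e : nat -> M) r :
  (fun n => scons x e (upr r n)) = scons x (fun n => e (r n)).
Proof. extensionality n; destruct n; reflexivity. Qed.

Lemma sat_ren M D mem ur p : forall r e,
  sat M D mem ur e (ren r p) <-> sat M D mem ur (fun n => e (r n)) p.
Proof.
  induction p; intros r e; simpl; try tauto.
  - rewrite IHp1, IHp2; tauto.
  - rewrite IHp1, IHp2; tauto.
  - rewrite IHp1, IHp2; tauto.
  - split; intros H x Hx; specialize (H x Hx); rewrite IHp, scons_upr in *; auto.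
  - split; intros [x [Hx H]]; exists x; split; auto; rewrite IHp, scons_upr in *; auto.
Qed.

Fixpoint fvb (p : form) : nat :=
  match p with
  | FMem i j => max (S i) (S j)
  | FUr i => S i
  | FEq i j => max (S i) (S j)
  | FBot => 0
  | FImp p q => max (fvb p) (fvb q)
  | FAnd p q => max (fvb p) (fvb q)
  | FOr p q => max (fvb p) (fvb q)
  | FAll p => pred (fvb p)
  | FEx p => pred (fvb p)
  end.

Lemma sat_agree M D mem ur p : forall e e',
  (forall n, n < fvb p -> e n = e' n) ->
  (sat M D mem ur e p <-> sat M D mem ur e' p).
Proof.
  induction p; intros e e' H; simpl in *.
  - rewrite (H n) by lia; rewrite (H n0) by lia; tauto.
  - rewrite (H n) by lia; tauto.
  - rewrite (H n) by lia; rewrite (H n0) by lia; tauto.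
  - tauto.
  - rewrite (IHp1 e e'), (IHp2 e e') by (intros; apply H; lia); tauto.
  - rewrite (IHp1 e e'), (IHp2 e e') by (intros; apply H; lia); tauto.
  - rewrite (IHp1 e e'), (IHp2 e e') by (intros; apply H; lia); tauto.
  - assert (Hs : forall x, forall n, n < fvb p -> scons x e n = scons x e' n).
    { intros x [|n] Hn; simpl; auto. apply H; lia. }
    split; intros H1 x Hx; specialize (H1 x Hx);
      [rewrite <- (IHp _ _ (Hs x)) | rewrite (IHp _ _ (Hs x))]; auto.
  - assert (Hs : forall x, forall n, n < fvb p -> scons x e n = scons x e' n).
    { intros x [|n] Hn; simpl; auto. apply H; lia. }
    split; intros [x [Hx H1]]; exists x; split; auto;
      [rewrite <- (IHp _ _ (Hs x)) | rewrite (IHp _ _ (Hs x))]; auto.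
Qed.

Section Amb.
Variables (M : Type) (mem : M -> M -> Prop) (ur : M -> Prop).

Definition Def (P : (nat -> M) -> Prop) :=
  exists phi, forall e, sat M (fun _ => True) mem ur e phi <-> P e.

Lemma Def_ext P Q : Def P -> (forall e, P e <-> Q e) -> Def Q.
Proof. intros [phi H] H2; exists phi; intro e; rewrite H; auto. Qed.
Lemma Def_mem i j : Def (fun e => mem (e i) (e j)).
Proof. exists (FMem i j); intro; simpl; tauto. Qed.
Lemma Def_ur i : Def (fun e => ur (e i)).
Proof. exists (FUr i); intro; simpl; tauto. Qed.
Lemma Def_eq i j : Def (fun e => e i = e j).
Proof. exists (FEq i j); intro; simpl; tauto. Qed.
Lemma Def_False : Def (fun e => False).
Proof. exists FBot; intro; simpl; tauto. Qed.
Lemma Def_True : Def (fun e => True).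
Proof. exists (FImp FBot FBot); intro; simpl; tauto. Qed.
Lemma Def_imp P Q : Def P -> Def Q -> Def (fun e => P e -> Q e).
Proof. intros [p Hp] [q Hq]; exists (FImp p q); intro; simpl; rewrite Hp, Hq; tauto. Qed.
Lemma Def_and P Q : Def P -> Def Q -> Def (fun e => P e /\ Q e).
Proof. intros [p Hp] [q Hq]; exists (FAnd p q); intro; simpl; rewrite Hp, Hq; tauto. Qed.
Lemma Def_or P Q : Def P -> Def Q -> Def (fun e => P e \/ Q e).
Proof. intros [p Hp] [q Hq]; exists (FOr p q); intro; simpl; rewrite Hp, Hq; tauto. Qed.
Lemma Def_iff P Q : Def P -> Def Q -> Def (fun e => P e <-> Q e).
Proof. intros [p Hp] [q Hq]; exists (FAnd (FImp p q) (FImp q p)); intro; simpl; rewrite Hp, Hq; tauto. Qed.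
Lemma Def_all P : Def P -> Def (fun e => forall x, P (scons x e)).
Proof. intros [p Hp]; exists (FAll p); intro; simpl; split; intros H x; [apply Hp; apply H; auto| intros _; apply Hp; auto]. Qed.
Lemma Def_ex P : Def P -> Def (fun e => exists x, P (scons x e)).
Proof. intros [p Hp]; exists (FEx p); intro; simpl; split; [intros [x [_ H]]; exists x; apply Hp; auto | intros [x H]; exists x; split; auto; apply Hp; auto]. Qed.
Lemma Def_sat r phi : Def (fun e => sat M (fun _ => True) mem ur (fun n => e (r n)) phi).
Proof. exists (ren r phi); intro; apply sat_ren. Qed.

End Amb.

Ltac solve_def :=
  cbv beta;
  match goal with
  | |- Def _ _ _ (fun e => forall x : ?T, @?B e x) =>
      let P := constr:(fun e' : nat -> T => B (fun n => e' (S n)) (e' 0)) in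
      apply (Def_all _ _ _ P); solve_def
  | |- Def _ _ _ (fun e => exists x : ?T, @?B e x) =>
      let P := constr:(fun e' : nat -> T => B (fun n => e' (S n)) (e' 0)) in
      apply (Def_ex _ _ _ P); solve_def
  | |- Def _ _ _ (fun e => _ <-> _) => apply Def_iff; solve_def
  | |- Def _ _ _ (fun e => _ /\ _) => apply Def_and; solve_def
  | |- Def _ _ _ (fun e => _ \/ _) => apply Def_or; solve_def
  | |- Def _ _ _ (fun e => _ -> _) => apply Def_imp; solve_def
  | |- Def _ _ _ (fun e => ~ _) => apply Def_imp; [solve_def | apply Def_False]
  | |- Def _ _ _ (fun e => False) => apply Def_False
  | |- Def _ _ _ (fun e => True) => apply Def_True
  | |- Def _ ?mem _ (fun e => ?mem (e ?i) (e ?j)) => apply (Def_mem _ mem _ i j)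
  | |- Def _ _ ?ur (fun e => ?ur (e ?i)) => apply (Def_ur _ _ ur i)
  | |- Def _ _ _ (fun e => e ?i = e ?j) => apply Def_eq
  | |- Def _ ?mem ?ur (fun e => sat _ (fun _ => True) ?mem ?ur (fun n => e (@?r n)) ?phi) =>
      apply (Def_sat _ mem ur r phi)
  end.

Section Z.
Variables (M : Type) (mem : M -> M -> Prop) (ur : M -> Prop).
Hypothesis ZF : ZFCU_R M (fun _ => True) mem ur.

Definition set (x : M) := ~ ur x.

Lemma ur_nomem a z : ur a -> ~ mem z a.
Proof. destruct ZF as [H _]. intros Ha. apply (H a I Ha z I). Qed.

Lemma ext x y : set x -> set y -> (forall z, mem z x <-> mem z y) -> x = y.
Proof. destruct ZF as [_ [H _]]. intros; apply H; auto. Qed.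

Lemma found x : (exists y, mem y x) -> exists y, mem y x /\ forall z, mem z y -> ~ mem z x.
Proof.
  destruct ZF as [_ [_ [H _]]]. intros [y Hy].
  destruct (H x I (ex_intro _ y (conj I Hy))) as [y0 [_ [H1 H2]]].
  exists y0; split; [exact H1|]. intros z Hz; apply (H2 z I Hz).
Qed.

Lemma pairing x y : exists p, set p /\ forall z, mem z p <-> z = x \/ z = y.
Proof.
  destruct ZF as [_ [_ [_ [H _]]]]. destruct (H x y I I) as [p [_ [H1 H2]]].
  exists p; split; [exact H1| intro z; apply H2; auto].
Qed.

Lemma union x : exists u, set u /\ forall z, mem z u <-> exists y, mem y x /\ mem z y.
Proof.
  destruct ZF as [_ [_ [_ [_ [H _]]]]]. destruct (H x I) as [u [_ [H1 H2]]].
  exists u; split; [exact H1| intro z; rewrite H2 by auto; firstorder].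
Qed.

Lemma powerset x : exists p, set p /\ forall y, mem y p <-> set y /\ forall z, mem z y -> mem z x.
Proof.
  destruct ZF as [_ [_ [_ [_ [_ [H _]]]]]]. destruct (H x I) as [p [_ [H1 H2]]].
  exists p; split; [exact H1| intro y; rewrite H2 by auto; unfold set, isset; firstorder].
Qed.

Lemma sep P : Def M mem ur P -> forall e x,
  exists y, set y /\ forall z, mem z y <-> mem z x /\ P (scons z e).
Proof.
  intros [phi Hphi] e x.
  destruct ZF as [_ [_ [_ [_ [_ [_ [_ [H _]]]]]]]].
  destruct (H phi e (fun _ => I) x I) as [y [_ [H1 H2]]].
  exists y; split; auto. intro z; rewrite H2 by auto; rewrite Hphi; tauto.
Qed.

Lemma repl R : Def M mem ur R -> forall e x,
  (forall u, mem u x -> exists v, R (scons v (scons u e)) /\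
       forall v', R (scons v' (scons u e)) -> v' = v) ->
  exists y, set y /\ forall v, mem v y <-> exists u, mem u x /\ R (scons v (scons u e)).
Proof.
  intros [phi Hphi] e x Hf.
  destruct ZF as [_ [_ [_ [_ [_ [_ [_ [_ [H _]]]]]]]]].
  destruct (H phi e (fun _ => I) x I) as [y [_ [H1 H2]]].
  { intros u _ Hu. destruct (Hf u Hu) as [v [Hv Hu']]. exists v; split; auto.
    split; [apply Hphi; auto|]. intros v' _ Hv'. apply Hu'; apply Hphi; auto. }
  exists y; split; auto. intro v; rewrite H2 by auto.
  split; intros [u Hu]; exists u; [destruct Hu as [_ [Hu1 Hu2]] | destruct Hu as [Hu1 Hu2]];
    repeat split; auto; apply Hphi; auto.
Qed.

Lemma bunion x y : exists u, set u /\ forall z, mem z u <-> mem z x \/ mem z y.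
Proof.
  destruct (pairing x y) as [p [Hp Hp']]. destruct (union p) as [u [Hu Hu']].
  exists u; split; auto. intro z; rewrite Hu'. split.
  - intros [w [Hw Hz]]; apply Hp' in Hw; destruct Hw; subst; auto.
  - intros [Hz|Hz]; [exists x|exists y]; rewrite Hp'; auto.
Qed.

Lemma single x : exists s, set s /\ forall z, mem z s <-> z = x.
Proof. destruct (pairing x x) as [p [Hp Hp']]; exists p; split; auto; intro; rewrite Hp'; tauto. Qed.

Lemma addone x y : exists u, set u /\ forall z, mem z u <-> mem z x \/ z = y.
Proof.
  destruct (single y) as [s [Hs Hs']]. destruct (bunion x s) as [u [Hu Hu']].
  exists u; split; auto; intro; rewrite Hu', Hs'; tauto.
Qed.

Definition sing z x := set z /\ forall w, mem w z <-> w = x.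
Definition dbl z x y := set z /\ forall w, mem w z <-> w = x \/ w = y.
Definition isPair p x y := set p /\ forall z, mem z p <-> sing z x \/ dbl z x y.

Lemma pair_ex x y : exists p, isPair p x y.
Proof.
  destruct (single x) as [s [Hs Hs']]. destruct (pairing x y) as [d [Hd Hd']].
  destruct (pairing s d) as [p [Hp Hp']]. exists p; split; auto.
  intro z; rewrite Hp'; split.
  - intros [->| ->]; [left|right]; split; auto.
  - intros [[Hz Hz']|[Hz Hz']]; [left|right]; apply ext; auto;
      intro w; rewrite ?Hs', ?Hd', ?Hz'; tauto.
Qed.

Lemma pair_inj p x y x' y' : isPair p x y -> isPair p x' y' -> x = x' /\ y = y'.
Proof.
  intros [Hp H1] [_ H2].
  destruct (single x) as [s [Hs Hs']].
  assert (Hsx : sing s x) by (split; auto).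
  assert (Exx : x = x').
  { assert (mem s p) by (apply H1; auto). apply H2 in H.
    destruct H as [[_ H]|[_ H]].
    - assert (mem x' s) by (apply H; reflexivity). apply Hs' in H0. auto.
    - assert (mem x' s) by (apply H; left; reflexivity). apply Hs' in H0. auto. }
  subst x'. split; auto.
  destruct (pairing x y) as [d [Hd Hd']].
  assert (Hdd : dbl d x y) by (split; auto).
  destruct (pairing x y') as [d' [Hd2 Hd2']].
  assert (Hdd' : dbl d' x y') by (split; auto).
  assert (A1 : mem d p) by (apply H1; auto). apply H2 in A1.
  assert (A2 : sing d' x \/ dbl d' x y) by (apply H1; apply H2; auto).
  assert (Hyd : mem y d) by (apply Hd'; auto).
  assert (Hyd' : mem y' d') by (apply Hd2'; auto).
  destruct A1 as [[_ A1]|[_ A1]]; apply A1 in Hyd;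
  destruct A2 as [[_ A2]|[_ A2]]; apply A2 in Hyd'; intuition congruence.
Qed.

Lemma pair_uniq p q x y : isPair p x y -> isPair q x y -> p = q.
Proof. intros [Hp H1] [Hq H2]; apply ext; auto; intro z; rewrite H1, H2; tauto. Qed.

Notation transitive := (transitive M mem ur).
Notation in_TC := (in_TC_singleton M mem ur).

Definition HasT x := exists t, transitive t /\ mem x t.

Lemma Def_inTC i j : Def M mem ur (fun E => in_TC (E i) (E j)).
Proof. unfold in_TC_singleton, Defs.transitive. solve_def. Qed.

Lemma TC_ex x : HasT x -> exists s, transitive s /\ mem x s /\ forall y, mem y s <-> in_TC y x.
Proof.
  intros [t [Ht Hx]].
  destruct (sep _ (Def_inTC 0 1) (scons x (fun _ => x)) t) as [s [Hs Hs']]. simpl in Hs'.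
  assert (E : forall y, mem y s <-> in_TC y x).
  { intro y; rewrite Hs'; split; [tauto|]. intro H; split; auto. }
  exists s; split; [split|split]; auto.
  - intros y z Hy Hz. apply E. apply E in Hy. intros t' Ht' Hx'. pose proof (Hy t' Ht' Hx') as Hy'. destruct Ht' as [_ Ht'].
    apply (Ht' y); auto.
  - apply E. intros t' _ H; auto.
Qed.

Variables (phiI : form) (eI : nat -> M).
Hypothesis Hid : is_A_ideal M mem ur (defined_class mem ur phiI eI).

Notation I := (defined_class mem ur phiI eI).
Notation U := (U_ideal M mem ur I).

Lemma I_sets k : I k -> set k /\ forall z, mem z k -> ur z.
Proof. destruct Hid as [H _]; apply H. Qed.
Lemma I_notall k : set k -> (forall z, mem z k <-> ur z) -> ~ I k.
Proof. destruct Hid as [_ [H _]]; apply H. Qed.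
Lemma I_empty o : set o -> (forall z, ~ mem z o) -> I o.
Proof. destruct Hid as [_ [_ [H _]]]; apply H. Qed.
Lemma I_bunion x y u : I x -> I y -> set u -> (forall z, mem z u <-> mem z x \/ mem z y) -> I u.
Proof. destruct Hid as [_ [_ [_ [H _]]]]; apply H. Qed.
Lemma I_sub x y : I x -> set y -> (forall z, mem z y -> mem z x) -> I y.
Proof. destruct Hid as [_ [_ [_ [_ [H _]]]]]; apply H. Qed.
Lemma I_single a s : ur a -> set s -> (forall z, mem z s <-> z = a) -> I s.
Proof. destruct Hid as [_ [_ [_ [_ [_ H]]]]]; apply H. Qed.

Lemma I_union x y : I x -> I y -> exists u, I u /\ forall z, mem z u <-> mem z x \/ mem z y.
Proof.
  intros Hx Hy. destruct (bunion x y) as [u [Hu Hu']]. exists u; split; auto.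
  apply (I_bunion x y u); auto.
Qed.

Lemma I_ex_empty : exists o, I o /\ set o /\ forall z, ~ mem z o.
Proof.
  destruct (sep (fun _ => False) (Def_False _ _ _) (fun _ => eI 0) (eI 0)) as [o [Ho Ho']].
  assert (forall z, ~ mem z o) by (intros z Hz; apply Ho' in Hz; tauto).
  exists o; repeat split; auto. apply I_empty; auto.
Qed.

Lemma U_intro y t S : transitive t -> mem y t -> I S ->
  (forall a, ur a -> mem a t -> mem a S) -> U y.
Proof.
  intros Ht Hy HS HSt.
  destruct (sep _ (Def_inTC 0 1) (scons y (fun _ => y)) S) as [k [Hk Hk']]. simpl in Hk'.
  exists k. split.
  - split; auto. intro a. rewrite Hk'. split.
    + intros [H1 H2]; split; auto; apply (I_sets S HS); auto.
    + intros [H1 H2]; split; auto; apply HSt; auto.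
  - apply (I_sub S); auto. intros z Hz; apply (proj1 (proj1 (Hk' z) Hz)).
Qed.

Lemma U_T x : U x -> HasT x.
Proof.
  intros [k [[Hk Hk'] HI]]. apply NNPP; intro HN.
  apply (I_notall k Hk); auto. intro z; rewrite Hk'; split; [tauto|].
  intro Hz; split; auto. intros t Ht Hx. exfalso; apply HN; exists t; auto.
Qed.

Lemma U_data x : U x -> exists s k, transitive s /\ mem x s /\ (forall y, mem y s <-> in_TC y x)
   /\ I k /\ (forall a, ur a -> mem a s -> mem a k).
Proof.
  intros HU. destruct (TC_ex x (U_T x HU)) as [s [Hs [Hxs Hs']]].
  destruct HU as [k [[Hk Hk'] HI]].
  exists s, k; refine (conj Hs (conj Hxs (conj Hs' (conj HI _)))).
  intros a Ha Has. apply Hk'. split; auto. apply Hs'; auto.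
Qed.

Lemma U_mem x y : U x -> mem y x -> U y.
Proof.
  intros HU Hy. destruct (U_data x HU) as [s [k [Hs [Hxs [_ [Hk Hsk]]]]]].
  apply (U_intro y s k); auto. destruct Hs as [_ Hs]. apply (Hs x); auto.
Qed.

Lemma U_ur a : ur a -> U a.
Proof.
  intros Ha. destruct (single a) as [s [Hs Hs']].
  apply (U_intro a s s); auto.
  - split; auto. intros y z Hy Hz. apply Hs' in Hy; subst. exfalso; apply (ur_nomem a z); auto.
  - apply Hs'; auto.
  - apply (I_single a s); auto.
Qed.

Lemma trans_union t1 t2 : transitive t1 -> transitive t2 ->
  exists t, transitive t /\ forall z, mem z t <-> mem z t1 \/ mem z t2.
Proof.
  intros [H1 H1'] [H2 H2']. destruct (bunion t1 t2) as [t [Ht Ht']].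
  exists t; split; auto. split; auto. intros y z Hy Hz. apply Ht' in Hy. apply Ht'.
  destruct Hy; [left; apply (H1' y)|right; apply (H2' y)]; auto.
Qed.

Lemma U_build y t S : transitive t -> set y -> (forall z, mem z y -> mem z t) -> I S ->
  (forall a, ur a -> mem a t -> mem a S) -> U y.
Proof.
  intros [Ht Ht'] Hy Hyt HS HSt. destruct (addone t y) as [t2 [Ht2 Ht2']].
  apply (U_intro y t2 S); auto.
  - split; auto. intros u z Hu Hz. apply Ht2'. apply Ht2' in Hu. left.
    destruct Hu as [Hu| ->]; [apply (Ht' u)|apply Hyt]; auto.
  - apply Ht2'; auto.
  - intros a Ha Hat. apply Ht2' in Hat. destruct Hat as [Hat| ->]; [apply HSt; auto|].
    exfalso; apply Hy; auto.
Qed.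

Lemma U_subTC x y : U x -> set y -> (forall z, mem z y -> in_TC z x) -> U y.
Proof.
  intros HU Hy Hz. destruct (U_data x HU) as [s [k [Hs [Hxs [Hs' [Hk Hsk]]]]]].
  apply (U_build y s k); auto. intros z Hzy; apply Hs'; auto.
Qed.

Lemma inTC_self x : in_TC x x.
Proof. intros t _ H; auto. Qed.
Lemma inTC_mem x y : mem y x -> in_TC y x.
Proof. intros H t [_ Ht] Hx. apply (Ht x); auto. Qed.
Lemma inTC_trans x y z : in_TC y x -> mem z y -> in_TC z x.
Proof. intros H Hz t Ht Hx. pose proof (H t Ht Hx). destruct Ht as [_ Ht]. apply (Ht y); auto. Qed.

Definition ZU := U.

Lemma U_ax_urelements : ax_urelements M U mem ur.
Proof. intros a _ Ha z _. apply ur_nomem; auto. Qed.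

Lemma U_ax_ext : ax_extensionality M U mem ur.
Proof.
  intros x y Hx Hy Sx Sy H. apply ext; auto. intro z; split; intro Hz.
  - apply H; auto. apply (U_mem x); auto.
  - apply H; auto. apply (U_mem y); auto.
Qed.

Lemma U_ax_found : ax_foundation M U mem.
Proof.
  intros x Hx [y [Hy Hyx]]. destruct (found x (ex_intro _ y Hyx)) as [y0 [H1 H2]].
  exists y0; split; [apply (U_mem x); auto|]. split; [exact H1| intros z _ Hz; apply H2; auto].
Qed.

Lemma U_ax_pair : ax_pairing M U mem ur.
Proof.
  intros x y Hx Hy. destruct (pairing x y) as [p [Hp Hp']].
  exists p; split; [|split; [exact Hp| intros z _; apply Hp']].
  destruct (U_data x Hx) as [s1 [k1 [Hs1 [Hxs1 [_ [Hk1 Hsk1]]]]]].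
  destruct (U_data y Hy) as [s2 [k2 [Hs2 [Hxs2 [_ [Hk2 Hsk2]]]]]].
  destruct (trans_union s1 s2 Hs1 Hs2) as [t [Ht Ht']].
  destruct (I_union k1 k2 Hk1 Hk2) as [k [Hk Hk']].
  apply (U_build p t k); auto.
  - intros z Hz. apply Ht'. apply Hp' in Hz. destruct Hz; subst; auto.
  - intros a Ha Hat. apply Hk'. apply Ht' in Hat. destruct Hat; auto.
Qed.

Lemma U_ax_union : ax_union M U mem ur.
Proof.
  intros x Hx. destruct (union x) as [u [Hu Hu']].
  exists u; split; [|split; [exact Hu|]].
  - apply (U_subTC x); auto. intros z Hz. apply Hu' in Hz. destruct Hz as [y [Hy Hzy]].
    apply (inTC_trans x y); auto. apply inTC_mem; auto.
  - intros z Hz. rewrite Hu'. split.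
    + intros [y [Hy Hzy]]. exists y; split; auto. apply (U_mem x); auto.
    + intros [y [_ H]]; exists y; auto.
Qed.

Lemma U_ax_power : ax_powerset M U mem ur.
Proof.
  intros x Hx. destruct (powerset x) as [p [Hp Hp']].
  exists p; split; [|split; [exact Hp|]].
  - destruct (U_data x Hx) as [s [k [[Hs Hst] [Hxs [Hs' [Hk Hsk]]]]]].
    destruct (bunion s p) as [t [Ht Ht']].
    apply (U_build p t k); auto.
    + split; auto. intros y z Hy Hz. apply Ht'. apply Ht' in Hy. left.
      destruct Hy as [Hy|Hy]; [apply (Hst y); auto|].
      apply Hp' in Hy. destruct Hy as [_ Hy]. apply (Hst x); auto.
    + intros z Hz; apply Ht'; auto.
    + intros a Ha Hat. apply Ht' in Hat. destruct Hat as [Hat|Hat]; [apply Hsk; auto|].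
      apply Hp' in Hat. destruct Hat as [Hat _]; contradiction.
  - intros y Hy. rewrite Hp'. unfold isset. split.
    + intros [H1 H2]; split; auto.
    + intros [H1 H2]; split; auto. intros z Hz; apply H2; auto. apply (U_mem y); auto.
Qed.

Lemma U_ax_choice : ax_choice M U mem ur.
Proof.
  intros x Hx Hne Hdis.
  destruct ZF as [_ [_ [_ [_ [_ [_ [_ [_ [_ HC]]]]]]]]].
  destruct (HC x Logic.I) as [s [_ [Hs Hs']]].
  { intros y _ Hy. assert (U y) by (apply (U_mem x); auto).
    destruct (Hne y H Hy) as [H1 [z [_ Hz]]]. split; auto. exists z; auto. }
  { intros y y' _ _ Hy Hy' Hne' z _ Hz. apply (Hdis y y' (U_mem x y Hx Hy) (U_mem x y' Hx Hy') Hy Hy' Hne' z); auto.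
    apply (U_mem y); auto. apply (U_mem x); auto. }
  assert (Dp : Def M mem ur (fun E => exists y, mem y (E 1) /\ mem (E 0) y)) by solve_def.
  destruct (sep _ Dp (scons x (fun _ => x)) s) as [s2 [Hs2 Hs2']]. simpl in Hs2'.
  exists s2; split; [|split; [exact Hs2|]].
  - apply (U_subTC x); auto. intros z Hz. apply Hs2' in Hz. destruct Hz as [_ [y [Hy Hzy]]].
    apply (inTC_trans x y); auto. apply inTC_mem; auto.
  - intros y Hy Hyx. destruct (Hs' y Logic.I Hyx) as [c [_ [Hc1 [Hc2 Hc3]]]].
    exists c; split; [apply (U_mem y); auto|]. split; auto. split.
    + apply Hs2'; split; auto. exists y; auto.
    + intros c' _ Hc'1 Hc'2. apply Hc3; auto. apply Hs2' in Hc'2; tauto.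
Qed.

Lemma U_ax_inf : ax_infinity M U mem ur.
Proof.
  destruct ZF as [_ [_ [_ [_ [_ [_ [HI _]]]]]]].
  destruct HI as [w [_ [Hw [[o [_ [Ho [Ho' How]]]] Hsucc]]]].
  set (Ind := fun v => mem o v /\ forall x, mem x v -> forall s, ~ ur s ->
     (forall z, mem z s <-> mem z x \/ z = x) -> mem s v).
  assert (Dp : Def M mem ur (fun E => forall v, (mem (E 1) v /\ forall x, mem x v -> forall s, ~ ur s ->
     (forall z, mem z s <-> mem z x \/ z = x) -> mem s v) -> mem (E 0) v)) by solve_def.
  destruct (sep _ Dp (scons o (fun _ => o)) w) as [H [HH HH']]. simpl in HH'.
  fold Ind in HH'.
  assert (Indw : Ind w).
  { split; auto. intros x Hx s Hs Hs'. destruct (Hsucc x Logic.I Hx) as [s' [_ [Hs'w [Hs's Hs'']]]].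
    replace s with s'; auto. apply ext; auto. intro z; rewrite Hs'; apply Hs''; auto. }
  assert (IndH : Ind H).
  { split.
    - apply HH'; split; auto. intros v [Hv _]; auto.
    - intros x Hx s Hs Hs'. apply HH' in Hx. destruct Hx as [Hxw Hx]. apply HH'. split.
      + apply (proj2 Indw x Hxw s Hs Hs').
      + intros v Hv. apply (proj2 Hv x (Hx v Hv) s Hs Hs'). }
  assert (Dp2 : Def M mem ur (fun E => ~ ur (E 0) /\ forall m, mem m (E 0) -> mem m (E 1))) by solve_def.
  destruct (sep _ Dp2 (scons H (fun _ => H)) H) as [S2 [HS2 HS2']]. simpl in HS2'.
  assert (IndS2 : Ind S2).
  { split.
    - apply HS2'. split; [apply IndH|]. split; [exact Ho|]. intros m Hm; exfalso; apply (Ho' m Logic.I Hm).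
    - intros x Hx s Hs Hs'. apply HS2' in Hx. destruct Hx as [HxH [Hxs Hxm]].
      apply HS2'. split; [apply (proj2 IndH x HxH s Hs Hs')|]. split; auto.
      intros m Hm. apply Hs' in Hm. destruct Hm as [Hm| ->]; auto. }
  assert (HHS : forall n, mem n H -> ~ ur n /\ forall m, mem m n -> mem m H).
  { intros n Hn. pose proof Hn as Hn'. apply HH' in Hn. destruct Hn as [_ Hn].
    specialize (Hn S2 IndS2). apply HS2' in Hn. tauto. }
  destruct I_ex_empty as [e0 [He0 [_ He0']]].
  assert (UH : U H).
  { apply (U_build H H e0); auto.
    - split; auto. intros y z Hy Hz. apply (proj2 (HHS y Hy)); auto.
    - intros a Ha HaH. exfalso. apply (proj1 (HHS a HaH)); auto. }
  exists H. split; [exact UH|]. split; [exact HH|]. split.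
  - exists o. split; [apply (U_mem H); auto; apply IndH|]. split; [exact Ho|]. split.
    + intros z _ Hz; apply (Ho' z Logic.I Hz).
    + apply IndH.
  - intros x Hx HxH. pose proof HxH as HxH'. apply HH' in HxH'. destruct HxH' as [Hxw _].
    destruct (Hsucc x Logic.I Hxw) as [s [_ [Hsw [Hs Hs']]]].
    assert (HsH : mem s H).
    { apply (proj2 IndH x HxH s Hs). intro z; apply Hs'; auto. }
    exists s. split; [apply (U_mem H); auto|]. split; [exact HsH|]. split; [exact Hs|].
    intros z _; apply Hs'; auto.
Qed.

Lemma U_proper : A_proper_class M U mem ur.
Proof.
  intros [s [Us [Ss Hs]]]. destruct Us as [k [[Hk Hk'] HIk]].
  apply (I_notall k Hk); [|exact HIk]. intro z. rewrite Hk'. split; [tauto|].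
  intro Hz. split; auto. apply inTC_mem. apply Hs; auto. apply U_ur; auto.
Qed.

Definition Ugen (p : nat -> M) (x : M) :=
  exists k, is_ker M mem ur x k /\ sat M (fun _ => True) mem ur (scons k p) phiI.

Lemma U_Ugen x : U x <-> Ugen eI x.
Proof. reflexivity. Qed.

Lemma Def_U i f : Def M mem ur (fun E => Ugen (fun m => E (f m)) (E i)).
Proof.
  assert (D1 : Def M mem ur (fun E => is_ker M mem ur (E (S i)) (E 0) /\
                 sat M (fun _ => True) mem ur (fun n => E (upr f n)) phiI)).
  { apply Def_and. unfold is_ker, in_TC_singleton, Defs.transitive. solve_def.
    apply Def_sat. }
  eapply Def_ext; [apply (Def_ex _ _ _ _ D1)|]. intro E. simpl.
  unfold Ugen. setoid_rewrite scons_upr. reflexivity.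
Qed.

Lemma Def_satU phi : forall f g,
  Def M mem ur (fun E => sat M (Ugen (fun m => E (f m))) mem ur (fun n => E (g n)) phi).
Proof.
  induction phi; intros f g; simpl.
  - apply Def_mem.
  - apply Def_ur.
  - apply Def_eq.
  - apply Def_False.
  - apply Def_imp; auto.
  - apply Def_and; auto.
  - apply Def_or; auto.
  - eapply Def_ext; [apply (Def_all _ _ _ _ (Def_imp _ _ _ _ _ (Def_U 0 (fun m => S (f m))) (IHphi (fun m => S (f m)) (upr g))))|].
    intro E; simpl. setoid_rewrite scons_upr. reflexivity.
  - eapply Def_ext; [apply (Def_ex _ _ _ _ (Def_and _ _ _ _ _ (Def_U 0 (fun m => S (f m))) (IHphi (fun m => S (f m)) (upr g))))|].
    intro E; simpl. setoid_rewrite scons_upr. reflexivity.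
Qed.

Fixpoint mg (e p : nat -> M) (n : nat) : M :=
  match n with
  | 0 => e 0
  | S 0 => p 0
  | S (S n) => mg (fun k => e (S k)) (fun k => p (S k)) n
  end.

Lemma mg_even m : forall e p, mg e p (2 * m) = e m.
Proof.
  induction m; intros e p; [reflexivity|].
  replace (2 * S m) with (S (S (2 * m))) by lia.
  change (mg (fun k => e (S k)) (fun k => p (S k)) (2*m) = e (S m)). rewrite IHm. reflexivity.
Qed.
Lemma mg_odd m : forall e p, mg e p (S (2 * m)) = p m.
Proof.
  induction m; intros e p; [reflexivity|].
  replace (S (2 * S m)) with (S (S (S (2 * m)))) by lia.
  change (mg (fun k => e (S k)) (fun k => p (S k)) (S (2*m)) = p (S m)). rewrite IHm. reflexivity.
Qed.

Definition fo (m : nat) := S (S (2 * m)).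
Definition go (n : nat) := match n with 0 => 0 | S n => S (2 * n) end.

Lemma mg_fo z e p : (fun m => scons z (mg e p) (fo m)) = p.
Proof. extensionality m. change (mg e p (S (2*m)) = p m). apply mg_odd. Qed.
Lemma mg_go z e p : (fun n => scons z (mg e p) (go n)) = scons z e.
Proof. extensionality n. destruct n; [reflexivity|]. change (mg e p (2*n) = e n). apply mg_even. Qed.

Lemma U_ax_sep : ax_separation M U mem ur.
Proof.
  intros phi e He x Hx.
  destruct (sep _ (Def_satU phi fo go) (mg e eI) x) as [y [Hy Hy']].
  cbv beta in Hy'. setoid_rewrite mg_fo in Hy'. setoid_rewrite mg_go in Hy'.
  exists y. split; [|split; [exact Hy|]].
  - apply (U_subTC x); auto. intros z Hz; apply inTC_mem; apply Hy'; auto.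
  - intros z _. apply Hy'.
Qed.

Lemma eind P : Def M mem ur P -> forall e t,
  (forall z, mem z t -> (forall z', mem z' z -> mem z' t -> P (scons z' e)) -> P (scons z e)) ->
  forall z, mem z t -> P (scons z e).
Proof.
  intros DP e t H z Hz. apply NNPP; intro HN.
  destruct (sep _ (Def_imp _ _ _ _ _ DP (Def_False _ _ _)) e t) as [D [HD HD']].
  destruct (found D) as [z0 [Hz0 Hmin]].
  { exists z. apply HD'; auto. }
  apply HD' in Hz0. destruct Hz0 as [Hz0t Hz0]. apply Hz0. apply H; auto.
  intros z' Hz' Hz't. apply NNPP; intro HN'. apply (Hmin z' Hz'). apply HD'; auto.
Qed.

Definition swR (b c z w : M) := (z = b /\ w = c) \/ (z = c /\ w = b) \/ (z <> b /\ z <> c /\ w = z).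
Definition app (G z w : M) := exists p, mem p G /\ isPair p z w.
Definition IsoOn (b c G t : M) :=
  ~ ur G /\
  (forall p, mem p G -> exists z w, mem z t /\ isPair p z w) /\
  (forall z, mem z t -> exists w, app G z w) /\
  (forall z w w', mem z t -> app G z w -> app G z w' -> w = w') /\
  (forall z w, mem z t -> app G z w -> ur z -> swR b c z w) /\
  (forall z w, mem z t -> app G z w -> ~ ur z -> ~ ur w /\ forall v, mem v w <-> exists z', mem z' z /\ app G z' v).

Ltac unf := unfold IsoOn, app, swR, isPair, sing, dbl, set, in_TC_singleton, Defs.transitive, is_ker in *.

Definition piR b c x y := exists t G, transitive t /\ mem x t /\ IsoOn b c G t /\ app G x y.
Definition pi b c x := epsilon (inhabits x) (piR b c x).

Section Swap.
Variables b c : M.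
Hypotheses (ub : ur b) (uc : ur c).

Lemma swR_fun z w w' : swR b c z w -> swR b c z w' -> w = w'.
Proof. unfold swR; intuition congruence. Qed.
Lemma swR_inj z z' w : swR b c z w -> swR b c z' w -> z = z'.
Proof. unfold swR; intuition congruence. Qed.
Lemma swR_ur z w : swR b c z w -> ur z -> ur w.
Proof. unfold swR; intuition congruence. Qed.
Lemma swR_sym z w : swR b c z w -> swR b c w z.
Proof. unfold swR; intuition (subst; auto). Qed.
Lemma swR_ex z : exists w, swR b c z w.
Proof.
  unfold swR. destruct (classic (z = b)) as [->|Hb]; [exists c; auto|].
  destruct (classic (z = c)) as [->|Hc]; [exists b; auto|]. exists z; auto.
Qed.

Lemma iso_first G t p : IsoOn b c G t -> mem p G -> forall z w, isPair p z w -> mem z t.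
Proof.
  intros HG Hp z w Hzw. destruct HG as [_ [H _]]. destruct (H p Hp) as [z' [w' [Hz' Hp']]].
  destruct (pair_inj p z w z' w' Hzw Hp') as [-> ->]; auto.
Qed.
Lemma iso_app_dom G t z w : IsoOn b c G t -> app G z w -> mem z t.
Proof. intros HG [p [Hp Hpz]]. apply (iso_first G t p HG Hp z w Hpz). Qed.

Lemma iso_uniq G1 t1 G2 t2 : transitive t1 -> transitive t2 -> IsoOn b c G1 t1 -> IsoOn b c G2 t2 ->
  forall z w1 w2, mem z t1 -> mem z t2 -> app G1 z w1 -> app G2 z w2 -> w1 = w2.
Proof.
  intros Ht1 Ht2 HG1 HG2.
  assert (DP : Def M mem ur (fun E => mem (E 0) (E 1) -> forall w1 w2,
     app (E 2) (E 0) w1 -> app (E 3) (E 0) w2 -> w1 = w2)) by (unf; solve_def).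
  intros z w1 w2 Hz1 Hz2.
  revert Hz2 w1 w2.
  refine (eind _ DP (scons t2 (scons G1 (scons G2 (fun _ => t2)))) t1 _ z Hz1).
  intros z0 Hz0 IH. simpl in IH |- *. intros Hz0' w1 w2 A1 A2.
  destruct HG1 as [_ [_ [E1 [F1 [U1 S1]]]]]. destruct HG2 as [_ [_ [E2 [F2 [U2 S2]]]]].
  destruct (classic (ur z0)) as [Hu|Hs].
  - apply (swR_fun z0); auto.
  - destruct (S1 z0 w1 Hz0 A1 Hs) as [Hw1 Hw1']. destruct (S2 z0 w2 Hz0' A2 Hs) as [Hw2 Hw2'].
    apply ext; auto. intro v. rewrite Hw1', Hw2'.
    assert (Hz't1 : forall z', mem z' z0 -> mem z' t1) by (intros; destruct Ht1 as [_ Ht1]; apply (Ht1 z0); auto).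
    assert (Hz't2 : forall z', mem z' z0 -> mem z' t2) by (intros; destruct Ht2 as [_ Ht2]; apply (Ht2 z0); auto).
    split; intros [z' [Hz' Ha]]; exists z'; split; auto.
    + destruct (E2 z' (Hz't2 z' Hz')) as [v' Hv']. replace v with v'; auto.
      symmetry; apply (IH z' Hz' (Hz't1 z' Hz') (Hz't2 z' Hz') v v'); auto.
    + destruct (E1 z' (Hz't1 z' Hz')) as [v' Hv']. replace v with v'; auto.
      apply (IH z' Hz' (Hz't1 z' Hz') (Hz't2 z' Hz') v' v); auto.
Qed.

Lemma iso_sub G1 G2 t : transitive t -> IsoOn b c G1 t -> IsoOn b c G2 t -> forall p, mem p G1 -> mem p G2.
Proof.
  intros Ht H1 H2 p Hp.
  pose proof H1 as [_ [P1 _]]. pose proof H2 as [_ [_ [E2 _]]].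
  destruct (P1 p Hp) as [z [w [Hz Hpz]]].
  destruct (E2 z Hz) as [w' [p' [Hp' Hp'z]]].
  assert (w = w').
  { apply (iso_uniq G1 t G2 t Ht Ht H1 H2 z w w' Hz Hz); [exists p; auto|exists p'; auto]. }
  subst w'. rewrite (pair_uniq p p' z w); auto.
Qed.

Lemma iso_eq G1 G2 t : transitive t -> IsoOn b c G1 t -> IsoOn b c G2 t -> G1 = G2.
Proof.
  intros Ht H1 H2. apply ext; [apply H1|apply H2|]. intro p; split; apply iso_sub with t; auto.
Qed.

Lemma iso_restrict G t s : transitive t -> transitive s -> (forall z, mem z s -> mem z t) ->
  IsoOn b c G t -> exists G', IsoOn b c G' s /\ forall z w, mem z s -> (app G' z w <-> app G z w).
Proof.
  intros Ht Hs Hst HG.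
  assert (DP : Def M mem ur (fun E => exists z w, isPair (E 0) z w /\ mem z (E 1))) by (unf; solve_def).
  destruct (sep _ DP (scons s (fun _ => s)) G) as [G' [HG' HG'']]. simpl in HG''.
  assert (Happ : forall z w, mem z s -> (app G' z w <-> app G z w)).
  { intros z w Hz. split; intros [p [Hp Hpz]]; exists p; split; auto.
    - apply HG'' in Hp; tauto.
    - apply HG''. split; auto. exists z, w; auto. }
  exists G'. split; auto.
  destruct HG as [_ [P1 [E1 [F1 [U1 S1]]]]].
  split; [exact HG'|]. split; [|split; [|split; [|split]]].
  - intros p Hp. apply HG'' in Hp. destruct Hp as [_ [z [w [Hpz Hz]]]]. exists z, w; auto.
  - intros z Hz. destruct (E1 z (Hst z Hz)) as [w Hw]. exists w. apply Happ; auto.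
  - intros z w w' Hz A1 A2. apply (F1 z w w' (Hst z Hz)); apply Happ; auto.
  - intros z w Hz A Hu. apply (U1 z w (Hst z Hz)); auto. apply Happ; auto.
  - intros z w Hz A Hu. apply Happ in A; auto. destruct (S1 z w (Hst z Hz) A Hu) as [Hw Hw'].
    split; auto. intro v. rewrite Hw'.
    assert (Hzs : forall z', mem z' z -> mem z' s) by (intros; destruct Hs as [_ Hs]; apply (Hs z); auto).
    split; intros [z' [Hz' Ha]]; exists z'; split; auto; apply Happ; auto.
Qed.

Lemma TCs_trans T z s : transitive T -> ~ ur s -> (forall y, mem y s <-> mem y T /\ in_TC y z) -> transitive s.
Proof.
  intros [HT HT'] Hs Hs'. split; auto. intros y u Hy Hu. apply Hs' in Hy. apply Hs'.
  destruct Hy as [HyT Hyz]. split; [apply (HT' y); auto|]. apply (inTC_trans z y); auto.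
Qed.

Lemma iso_exists T : transitive T -> forall x, mem x T -> exists t G, transitive t /\ mem x t /\ IsoOn b c G t.
Proof.
  intros HT.
  assert (DP : Def M mem ur (fun E => exists t G, transitive t /\ mem (E 0) t /\ IsoOn (E 1) (E 2) G t))
    by (unf; solve_def).
  refine (eind _ DP (scons b (scons c (fun _ => b))) T _).
  intros z0 Hz0 IH. simpl in IH |- *.
  assert (Hz0T : forall z', mem z' z0 -> mem z' T) by (intros; destruct HT as [_ HT]; apply (HT z0); auto).
  destruct (classic (exists z', mem z' z0 /\ in_TC z0 z')) as [[z' [Hz' Hin]]|Hnot].
  { destruct (IH z' Hz' (Hz0T z' Hz')) as [t' [G' [Ht' [Hz't' HG']]]].
    exists t', G'; split; [exact Ht'|split; [apply (Hin t' Ht' Hz't')|exact HG']]. }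
  assert (DR : Def M mem ur (fun E => exists s, (~ ur s /\ forall y, mem y s <-> mem y (E 2) /\ in_TC y (E 1))
                  /\ IsoOn (E 3) (E 4) (E 0) s)) by (unf; solve_def).
  set (env := scons T (scons b (scons c (fun _ => T)))).
  assert (Rfun : forall z', mem z' z0 -> exists g,
     (exists s, (~ ur s /\ forall y, mem y s <-> mem y T /\ in_TC y z') /\ IsoOn b c g s) /\
     forall g', (exists s, (~ ur s /\ forall y, mem y s <-> mem y T /\ in_TC y z') /\ IsoOn b c g' s) -> g' = g).
  { intros z' Hz'. destruct (IH z' Hz' (Hz0T z' Hz')) as [t' [G' [Ht' [Hz't' HG']]]].
    destruct (sep _ (Def_inTC 0 1) (scons z' (fun _ => z')) T) as [s [Hs Hs']]. simpl in Hs'.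
    assert (Hstr : transitive s) by (apply (TCs_trans T z'); auto).
    destruct (iso_restrict G' t' s Ht' Hstr) as [g [Hg _]]; auto.
    { intros y Hy. apply Hs' in Hy. destruct Hy as [_ Hy]. apply (Hy t' Ht' Hz't'). }
    exists g. split; [exists s; auto|].
    intros g' [s2 [[Hs2 Hs2'] Hg']].
    assert (s2 = s) by (apply ext; auto; intro y; rewrite Hs2', Hs'; tauto). subst s2.
    apply (iso_eq g' g s); auto. }
  destruct (repl _ DR env z0) as [Y [HY HY']].
  { intros u Hu. apply (Rfun u Hu). }
  simpl in HY'.
  destruct (union Y) as [H [HH HH']].
  assert (DT : Def M mem ur (fun E => exists z', mem z' (E 1) /\ in_TC (E 0) z')) by (unf; solve_def).
  destruct (sep _ DT (scons z0 (fun _ => z0)) T) as [t0 [Ht0 Ht0']]. simpl in Ht0'.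
  assert (HYd : forall g, mem g Y -> exists z' s, mem z' z0 /\ ~ ur s /\
              (forall y, mem y s <-> mem y T /\ in_TC y z') /\ IsoOn b c g s).
  { intros g Hg. apply HY' in Hg. destruct Hg as [z' [Hz' [s [[Hs Hs'] Hg]]]]. exists z', s; auto. }
  assert (HappH : forall y w, app H y w <-> exists g, mem g Y /\ app g y w).
  { intros y w. split.
    - intros [p [Hp Hpy]]. apply HH' in Hp. destruct Hp as [g [Hg Hpg]]. exists g; split; auto. exists p; auto.
    - intros [g [Hg [p [Hp Hpy]]]]. exists p; split; auto. apply HH'. exists g; auto. }
  assert (Hdom : forall y w, app H y w -> mem y t0 /\ exists g z' s, mem g Y /\ mem z' z0 /\ ~ ur s /\
              (forall y, mem y s <-> mem y T /\ in_TC y z') /\ IsoOn b c g s /\ mem y s /\ app g y w).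
  { intros y w Hyw. apply HappH in Hyw. destruct Hyw as [g [Hg Hgy]].
    destruct (HYd g Hg) as [z' [s [Hz' [Hs [Hs' Hgs]]]]].
    assert (Hys : mem y s) by (apply (iso_app_dom g s y w); auto).
    split.
    - apply Ht0'. apply Hs' in Hys. split; [tauto|]. exists z'; split; auto. tauto.
    - exists g, z', s. repeat (split; auto). }
  assert (FH : forall y w w', app H y w -> app H y w' -> w = w').
  { intros y w w' A1 A2.
    destruct (Hdom y w A1) as [_ [g1 [z1 [s1 [Hg1 [Hz1 [Hs1 [Hs1' [HI1 [Hy1 A1']]]]]]]]]].
    destruct (Hdom y w' A2) as [_ [g2 [z2 [s2 [Hg2 [Hz2 [Hs2 [Hs2' [HI2 [Hy2 A2']]]]]]]]]].
    apply (iso_uniq g1 s1 g2 s2) with y; auto; [apply (TCs_trans T z1)|apply (TCs_trans T z2)]; auto. }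
  assert (EH : forall y, mem y t0 -> exists w, app H y w).
  { intros y Hy. apply Ht0' in Hy. destruct Hy as [HyT [z' [Hz' Hyz']]].
    destruct (Rfun z' Hz') as [g [[s [[Hs Hs'] Hg]] _]].
    assert (Hys : mem y s) by (apply Hs'; auto).
    destruct (proj1 (proj2 (proj2 Hg)) y Hys) as [w Hw].
    exists w. apply HappH. exists g. split; [|exact Hw]. apply HY'. exists z'. split; [exact Hz'|].
    exists s. split; [split; assumption|exact Hg]. }
  assert (Ht0tr : transitive t0).
  { split; auto. intros y u Hy Hu. apply Ht0' in Hy. apply Ht0'. destruct Hy as [HyT [z' [Hz' Hyz']]].
    split; [destruct HT as [_ HT]; apply (HT y); auto|]. exists z'; split; auto. apply (inTC_trans z' y); auto. }
  assert (Hz0t0 : ~ mem z0 t0).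
  { intro Hm. apply Ht0' in Hm. destruct Hm as [_ [z' [Hz' Hin]]]. apply Hnot. exists z'; auto. }
  assert (Hzt0 : forall z', mem z' z0 -> mem z' t0).
  { intros z' Hz'. apply Ht0'. split; auto. exists z'. split; auto. apply inTC_self. }
  assert (Hw0 : exists w0, (ur z0 -> swR b c z0 w0) /\ (~ ur z0 -> ~ ur w0 /\ forall v, mem v w0 <-> exists z', mem z' z0 /\ app H z' v)).
  { destruct (classic (ur z0)) as [Hu|Hs].
    - destruct (swR_ex z0) as [w0 Hw0]. exists w0; split; auto. intro; contradiction.
    - assert (DA : Def M mem ur (fun E => app (E 2) (E 1) (E 0))) by (unf; solve_def).
      destruct (repl _ DA (scons H (fun _ => H)) z0) as [w0 [Hw0 Hw0']].
      { intros u Hu. destruct (EH u (Hzt0 u Hu)) as [v Hv]. exists v. simpl. split; auto.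
        intros v' Hv'. apply (FH u); auto. }
      simpl in Hw0'. exists w0. split; [intro; contradiction|]. intros _. split; auto. }
  destruct Hw0 as [w0 [Hw0u Hw0s]].
  destruct (pair_ex z0 w0) as [p0 Hp0].
  destruct (addone H p0) as [G [HG HG']].
  destruct (addone t0 z0) as [t [Ht Ht']].
  assert (HappG : forall y w, app G y w <-> app H y w \/ (y = z0 /\ w = w0)).
  { intros y w. split.
    - intros [p [Hp Hpy]]. apply HG' in Hp. destruct Hp as [Hp| ->].
      + left; exists p; auto.
      + right. destruct (pair_inj p0 y w z0 w0 Hpy Hp0); auto.
    - intros [[p [Hp Hpy]]|[-> ->]];
        [exists p; split; [apply HG'; left; exact Hp|exact Hpy]
        |exists p0; split; [apply HG'; right; reflexivity|exact Hp0]]. }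
  assert (HappG' : forall y w, mem y t0 -> (app G y w <-> app H y w)).
  { intros y w Hy. rewrite HappG. split; [|tauto]. intros [A|[-> _]]; [auto|contradiction]. }
  assert (HappG0 : forall w, app G z0 w <-> w = w0).
  { intros w. rewrite HappG. split; [|intros ->; right; auto].
    intros [A|[_ A]]; auto. exfalso. apply Hz0t0. apply (Hdom z0 w A). }
  assert (Httr : transitive t).
  { split; auto. intros y u Hy Hu. apply Ht'. left. apply Ht' in Hy. destruct Hy as [Hy| ->].
    - destruct Ht0tr as [_ Ht0tr]. apply (Ht0tr y); auto.
    - apply Hzt0; auto. }
  exists t, G. split; [exact Httr|]. split; [apply Ht'; right; reflexivity|].
  split; [exact HG|]. split; [|split; [|split; [|split]]].
  - intros p Hp. apply HG' in Hp. destruct Hp as [Hp| ->].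
    + pose proof Hp as Hp2. apply HH' in Hp2. destruct Hp2 as [g [Hg Hpg]].
      destruct (HYd g Hg) as [z' [s [_ [_ [_ Hgs]]]]].
      destruct (proj1 (proj2 Hgs) p Hpg) as [z [w [_ Hpz]]].
      exists z, w. split; auto. apply Ht'. left. apply (Hdom z w). exists p; auto.
    + exists z0, w0. split; auto. apply Ht'; auto.
  - intros z Hz. apply Ht' in Hz. destruct Hz as [Hz| ->].
    + destruct (EH z Hz) as [w Hw]. exists w. apply HappG'; auto.
    + exists w0. apply HappG0; auto.
  - intros z w w' Hz A1 A2. apply Ht' in Hz. destruct Hz as [Hz| ->].
    + apply HappG' in A1; auto. apply HappG' in A2; auto. apply (FH z); auto.
    + apply HappG0 in A1. apply HappG0 in A2. congruence.
  - intros z w Hz A Hu. apply Ht' in Hz. destruct Hz as [Hz| ->].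
    + apply HappG' in A; auto.
      destruct (Hdom z w A) as [_ [g [z' [s [Hg [Hz' [Hs [Hs' [Hgs [Hzs Ag]]]]]]]]]].
      apply (proj1 (proj2 (proj2 (proj2 (proj2 Hgs)))) z w Hzs Ag Hu).
    + apply HappG0 in A. subst w. auto.
  - intros z w Hz A Hu. apply Ht' in Hz. destruct Hz as [Hz| ->].
    + apply HappG' in A; auto.
      destruct (Hdom z w A) as [_ [g [z' [s [Hg [Hz' [Hs [Hs' [Hgs [Hzs Ag]]]]]]]]]].
      destruct (proj2 (proj2 (proj2 (proj2 (proj2 Hgs)))) z w Hzs Ag Hu) as [Hw Hw'].
      split; auto. intro v. rewrite Hw'.
      assert (Hstr : transitive s) by (apply (TCs_trans T z'); auto).
      assert (Hzs' : forall y, mem y z -> mem y s) by (intros y Hy; destruct Hstr as [_ Hstr]; apply (Hstr z); auto).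
      assert (Hzt : forall y, mem y z -> mem y t0) by (intros y Hy; destruct Ht0tr as [_ Htr]; apply (Htr z); auto).
      split; intros [y [Hy Ay]]; exists y; split; auto.
      * apply HappG'; auto. apply HappH. exists g; auto.
      * apply HappG' in Ay; auto.
        destruct (proj1 (proj2 (proj2 Hgs)) y (Hzs' y Hy)) as [v' Hv'].
        replace v with v'; auto. apply (FH y); auto. apply HappH; exists g; auto.
    + apply HappG0 in A. subst w. destruct (Hw0s Hu) as [Hw0 Hw0']. split; auto.
      intro v. rewrite Hw0'. split; intros [y [Hy Ay]]; exists y; split; auto.
      * apply HappG'; auto.
      * apply HappG' in Ay; auto.
Qed.

Lemma iso_inj G t : transitive t -> IsoOn b c G t ->
  forall z1 z2 w, mem z1 t -> mem z2 t -> app G z1 w -> app G z2 w -> z1 = z2.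
Proof.
  intros Ht HG.
  assert (DP : Def M mem ur (fun E => forall z2 w, mem z2 (E 1) -> app (E 2) (E 0) w -> app (E 2) z2 w -> E 0 = z2))
    by (unf; solve_def).
  intros z1 z2 w Hz1 Hz2. revert z2 w Hz2.
  refine (eind _ DP (scons t (scons G (fun _ => t))) t _ z1 Hz1).
  intros z0 Hz0 IH. simpl in IH |- *. intros z2 w Hz2 A1 A2.
  pose proof HG as [_ [_ [E1 [F1 [U1 S1]]]]].
  assert (Hsub : forall y u, mem y t -> mem u y -> mem u t) by (destruct Ht as [_ Ht]; exact Ht).
  destruct (classic (ur z0)) as [Hu|Hs]; destruct (classic (ur z2)) as [Hu2|Hs2].
  - apply (swR_inj z0 z2 w); auto.
  - exfalso. apply (proj1 (S1 z2 w Hz2 A2 Hs2)). apply (swR_ur z0); auto.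
  - exfalso. apply (proj1 (S1 z0 w Hz0 A1 Hs)). apply (swR_ur z2); auto.
  - destruct (S1 z0 w Hz0 A1 Hs) as [Hw Hw1]. destruct (S1 z2 w Hz2 A2 Hs2) as [_ Hw2].
    apply ext; auto. intro u. split; intro Hu.
    + destruct (E1 u (Hsub z0 u Hz0 Hu)) as [v Hv].
      assert (mem v w) by (apply Hw1; exists u; auto).
      apply Hw2 in H. destruct H as [u2 [Hu2 Av]].
      rewrite (IH u Hu (Hsub z0 u Hz0 Hu) u2 v); auto. apply (Hsub z2); auto.
    + destruct (E1 u (Hsub z2 u Hz2 Hu)) as [v Hv].
      assert (mem v w) by (apply Hw2; exists u; auto).
      apply Hw1 in H. destruct H as [u1 [Hu1 Av]].
      rewrite <- (IH u1 Hu1 (Hsub z0 u1 Hz0 Hu1) u v); auto. apply (Hsub z2); auto.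
Qed.

Lemma iso_range G t : transitive t -> IsoOn b c G t ->
  exists t', transitive t' /\ forall w, mem w t' <-> exists z, mem z t /\ app G z w.
Proof.
  intros Ht HG. pose proof HG as [_ [_ [E1 [F1 [U1 S1]]]]].
  assert (DA : Def M mem ur (fun E => app (E 2) (E 1) (E 0))) by (unf; solve_def).
  destruct (repl _ DA (scons G (fun _ => G)) t) as [t' [Ht' Ht'']].
  { intros u Hu. destruct (E1 u Hu) as [v Hv]. exists v. simpl. split; auto.
    intros v' Hv'. apply (F1 u); auto. }
  simpl in Ht''. exists t'. split; auto. split; auto.
  intros w v Hw Hv. apply Ht'' in Hw. destruct Hw as [z [Hz A]]. apply Ht''.
  destruct (classic (ur z)) as [Hu|Hs].
  - exfalso. apply (ur_nomem w v); auto. apply (swR_ur z); auto.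
  - destruct (S1 z w Hz A Hs) as [_ Hw']. apply Hw' in Hv. destruct Hv as [z' [Hz' A']].
    exists z'. split; auto. destruct Ht as [_ Ht]. apply (Ht z); auto.
Qed.

Lemma iso_conv G t t' : transitive t -> IsoOn b c G t ->
  (forall w, mem w t' <-> exists z, mem z t /\ app G z w) ->
  exists K, IsoOn b c K t' /\ forall z w, app K w z <-> app G z w.
Proof.
  intros Ht HG Ht'. pose proof HG as [_ [P1 [E1 [F1 [U1 S1]]]]].
  assert (DR : Def M mem ur (fun E => exists z w, isPair (E 1) z w /\ isPair (E 0) w z)) by (unf; solve_def).
  destruct (repl _ DR (fun _ => G) G) as [K [HK HK']].
  { intros p Hp. destruct (P1 p Hp) as [z [w [_ Hpz]]]. destruct (pair_ex w z) as [q Hq].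
    exists q. simpl. split; [exists z, w; auto|].
    intros q' [z' [w' [Hp' Hq']]]. destruct (pair_inj p z w z' w' Hpz Hp') as [<- <-].
    apply (pair_uniq q' q w z); auto. }
  simpl in HK'.
  assert (HappK : forall z w, app K w z <-> app G z w).
  { intros z w. split.
    - intros [q [Hq Hqw]]. apply HK' in Hq. destruct Hq as [p [Hp [z' [w' [Hpz Hqz]]]]].
      destruct (pair_inj q w z w' z' Hqw Hqz) as [<- <-]. exists p; auto.
    - intros [p [Hp Hpz]]. destruct (pair_ex w z) as [q Hq]. exists q. split; auto.
      apply HK'. exists p. split; auto. exists z, w; auto. }
  assert (Hdom : forall z w, app G z w -> mem z t) by (intros z w A; apply (iso_app_dom G t z w); auto).
  exists K. split; auto.
  split; [exact HK|]. split; [|split; [|split; [|split]]].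
  - intros q Hq. apply HK' in Hq. destruct Hq as [p [Hp [z [w [Hpz Hqz]]]]].
    exists w, z. split; auto. apply Ht'. exists z. split; [apply (Hdom z w); exists p; auto|exists p; auto].
  - intros w Hw. apply Ht' in Hw. destruct Hw as [z [Hz A]]. exists z. apply HappK; auto.
  - intros w z1 z2 Hw A1 A2. apply HappK in A1. apply HappK in A2.
    apply (iso_inj G t Ht HG z1 z2 w); auto; [apply (Hdom z1 w)|apply (Hdom z2 w)]; auto.
  - intros w z Hw A Hu. apply HappK in A. pose proof (Hdom z w A) as Hz.
    destruct (classic (ur z)) as [Hzu|Hzs].
    + apply swR_sym. apply U1; auto.
    + exfalso. apply (proj1 (S1 z w Hz A Hzs)); auto.
  - intros w z Hw A Hs. apply HappK in A. pose proof (Hdom z w A) as Hz.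
    destruct (classic (ur z)) as [Hzu|Hzs].
    + exfalso. apply Hs. apply (swR_ur z); auto.
    + destruct (S1 z w Hz A Hzs) as [_ Hw']. split; auto. intro u. split.
      * intro Hu. assert (Hut : mem u t) by (destruct Ht as [_ Ht]; apply (Ht z); auto).
        destruct (E1 u Hut) as [v Hv]. exists v. split; [apply Hw'; exists u; auto|]. apply HappK; auto.
      * intros [w' [Hw'w A']]. apply HappK in A'. apply Hw' in Hw'w. destruct Hw'w as [z' [Hz' A'']].
        assert (Hz't : mem z' t) by (destruct Ht as [_ Ht]; apply (Ht z); auto).
        rewrite (iso_inj G t Ht HG u z' w'); auto. apply (Hdom u w'); auto.
Qed.

Lemma iso_TC x : HasT x -> exists s G, transitive s /\ mem x s /\ (forall y, mem y s <-> in_TC y x) /\ IsoOn b c G s.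
Proof.
  intros HT. destruct (TC_ex x HT) as [s [Hs [Hxs Hs']]].
  destruct (iso_exists s Hs x Hxs) as [t [G [Ht [Hxt HG]]]].
  destruct (iso_restrict G t s Ht Hs) as [G' [HG' _]]; auto.
  { intros y Hy. apply Hs' in Hy. apply (Hy t Ht Hxt). }
  exists s, G'. auto.
Qed.

Lemma pi_spec x : HasT x -> piR b c x (pi b c x).
Proof.
  intros HT. unfold pi. apply epsilon_spec.
  destruct (iso_TC x HT) as [s [G [Hs [Hxs [_ HG]]]]].
  destruct (proj1 (proj2 (proj2 HG)) x Hxs) as [w Hw]. exists w, s, G; auto.
Qed.

Lemma pi_app x t G : HasT x -> transitive t -> mem x t -> IsoOn b c G t -> app G x (pi b c x).
Proof.
  intros HT Ht Hxt HG. destruct (pi_spec x HT) as [t' [G' [Ht' [Hxt' [HG' A']]]]].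
  destruct (proj1 (proj2 (proj2 HG)) x Hxt) as [w Hw].
  replace (pi b c x) with w; auto.
  apply (iso_uniq G t G' t' Ht Ht' HG HG' x); auto.
Qed.

Lemma HasT_mem x y : HasT x -> mem y x -> HasT y.
Proof. intros [t [Ht Hx]] Hy. exists t. split; auto. destruct Ht as [_ Ht]. apply (Ht x); auto. Qed.

Lemma pi_ur x : HasT x -> (ur (pi b c x) <-> ur x).
Proof.
  intros HT. destruct (iso_TC x HT) as [s [G [Hs [Hxs [_ HG]]]]].
  pose proof (pi_app x s G HT Hs Hxs HG) as A.
  pose proof HG as [_ [_ [_ [_ [U1 S1]]]]].
  destruct (classic (ur x)) as [Hu|Hn]; split; intro H; auto.
  - apply (swR_ur x); auto.
  - exfalso. apply (proj1 (S1 x _ Hxs A Hn)); auto.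
  - contradiction.
Qed.

Lemma pi_mem x y : HasT x -> mem y x -> mem (pi b c y) (pi b c x).
Proof.
  intros HT Hy. destruct (iso_TC x HT) as [s [G [Hs [Hxs [_ HG]]]]].
  assert (Hys : mem y s) by (destruct Hs as [_ Hs]; apply (Hs x); auto).
  pose proof (pi_app x s G HT Hs Hxs HG) as A.
  pose proof (pi_app y s G (HasT_mem x y HT Hy) Hs Hys HG) as Ay.
  pose proof HG as [_ [_ [_ [_ [U1 S1]]]]].
  assert (Hx : ~ ur x) by (intro Hu; apply (ur_nomem x y); auto).
  apply (proj2 (S1 x _ Hxs A Hx)). exists y; auto.
Qed.

Lemma pi_mem_inv x v : HasT x -> mem v (pi b c x) -> exists y, mem y x /\ v = pi b c y.
Proof.
  intros HT Hv. destruct (iso_TC x HT) as [s [G [Hs [Hxs [_ HG]]]]].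
  pose proof (pi_app x s G HT Hs Hxs HG) as A.
  pose proof HG as [_ [_ [_ [F1 [U1 S1]]]]].
  destruct (classic (ur x)) as [Hu|Hn].
  - exfalso. apply (ur_nomem (pi b c x) v); auto. apply (swR_ur x); auto.
  - apply (proj2 (S1 x _ Hxs A Hn)) in Hv. destruct Hv as [y [Hy Ay]].
    exists y. split; auto.
    assert (Hys : mem y s) by (destruct Hs as [_ Hs]; apply (Hs x); auto).
    apply (F1 y); auto. apply (pi_app y s G); auto. apply (HasT_mem x); auto.
Qed.

Lemma pi_HasT x : HasT x -> HasT (pi b c x).
Proof.
  intros HT. destruct (iso_TC x HT) as [s [G [Hs [Hxs [_ HG]]]]].
  destruct (iso_range G s Hs HG) as [t' [Ht' Ht'']].
  exists t'. split; [exact Ht'|]. apply Ht''. exists x. split; [exact Hxs|]. apply (pi_app x s G); auto.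
Qed.

Lemma pi_inv x : HasT x -> pi b c (pi b c x) = x.
Proof.
  intros HT. destruct (iso_TC x HT) as [s [G [Hs [Hxs [_ HG]]]]].
  destruct (iso_range G s Hs HG) as [t' [Ht' Ht'']].
  destruct (iso_conv G s t' Hs HG Ht'') as [K [HK HKG]].
  pose proof (pi_app x s G HT Hs Hxs HG) as A.
  assert (Hpt' : mem (pi b c x) t') by (apply Ht''; exists x; auto).
  pose proof (pi_app (pi b c x) t' K (pi_HasT x HT) Ht' Hpt' HK) as A2.
  apply (proj1 (proj2 (proj2 (proj2 HK))) (pi b c x)); auto. apply HKG; auto.
Qed.

Lemma pi_inj x y : HasT x -> HasT y -> pi b c x = pi b c y -> x = y.
Proof. intros Hx Hy E. rewrite <- (pi_inv x Hx), <- (pi_inv y Hy), E. reflexivity. Qed.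

Lemma pi_fix x : HasT x -> (forall a, ur a -> in_TC a x -> a <> b /\ a <> c) -> pi b c x = x.
Proof.
  intros HT Hfix. destruct (iso_TC x HT) as [s [G [Hs [Hxs [Hs' HG]]]]].
  pose proof HG as [_ [_ [E1 [F1 [U1 S1]]]]].
  assert (DP : Def M mem ur (fun E => app (E 1) (E 0) (E 0))) by (unf; solve_def).
  assert (Hall : forall z, mem z s -> app G z z).
  { refine (eind _ DP (scons G (fun _ => G)) s _).
    intros z Hz IH. simpl in IH |- *. destruct (E1 z Hz) as [w Hw].
    destruct (classic (ur z)) as [Hu|Hn].
    - pose proof (U1 z w Hz Hw Hu) as Hsw. destruct (Hfix z Hu) as [Hb Hc]; [apply Hs'; auto|].
      unfold swR in Hsw. replace z with w at 2; auto. intuition congruence.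
    - destruct (S1 z w Hz Hw Hn) as [Hw1 Hw2]. replace z with w at 2; auto.
      apply ext; auto. intro v. rewrite Hw2. split.
      + intros [z' [Hz' A]]. assert (Hz's : mem z' s) by (destruct Hs as [_ Hs]; apply (Hs z); auto).
        replace v with z'; auto. apply (F1 z'); auto.
      + intro Hv. exists v. split; auto. apply IH; auto. destruct Hs as [_ Hs]; apply (Hs z); auto. }
  apply (F1 x); auto. eapply pi_app; eauto.
Qed.

Lemma pi_ker x w : HasT x -> ur w -> in_TC w (pi b c x) -> exists z, ur z /\ in_TC z x /\ swR b c z w.
Proof.
  intros HT Hw Hin. destruct (iso_TC x HT) as [s [G [Hs [Hxs [Hs' HG]]]]].
  destruct (iso_range G s Hs HG) as [t' [Ht' Ht'']].
  assert (Hpt' : mem (pi b c x) t') by (apply Ht''; exists x; split; [exact Hxs| apply (pi_app x s G); auto]).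
  pose proof (Hin t' Ht' Hpt') as Hwt. apply Ht'' in Hwt. destruct Hwt as [z [Hz A]].
  pose proof HG as [_ [_ [_ [_ [U1 S1]]]]].
  destruct (classic (ur z)) as [Hu|Hn].
  - exists z. split; auto. split; [apply Hs'; auto|]. apply U1; auto.
  - exfalso. apply (proj1 (S1 z w Hz A Hn)); auto.
Qed.

Lemma pi_U x : U x -> U (pi b c x).
Proof.
  intros HU. pose proof (U_T x HU) as HT.
  destruct (U_data x HU) as [s [k [Hs [Hxs [Hs' [Hk Hsk]]]]]].
  destruct (TC_ex (pi b c x) (pi_HasT x HT)) as [s2 [Hs2 [Hps2 Hs2']]].
  destruct (single b) as [sb [Hsb Hsb']]. destruct (single c) as [sc [Hsc Hsc']].
  destruct (I_union k sb Hk (I_single b sb ub Hsb Hsb')) as [k1 [Hk1 Hk1']].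
  destruct (I_union k1 sc Hk1 (I_single c sc uc Hsc Hsc')) as [k2 [Hk2 Hk2']].
  apply (U_intro _ s2 k2); auto.
  intros a Ha Has2. apply Hs2' in Has2. destruct (pi_ker x a HT Ha Has2) as [z [Hz [Hzx Hsw]]].
  apply Hk2'. unfold swR in Hsw. destruct Hsw as [[-> ->]|[[-> ->]|[_ [_ ->]]]].
  - right; apply Hsc'; auto.
  - left; apply Hk1'; right; apply Hsb'; auto.
  - left; apply Hk1'; left; apply Hsk; auto; apply Hs'; auto.
Qed.

Lemma scons_map (f : M -> M) x (e : nat -> M) : (fun n => f (scons x e n)) = scons (f x) (fun n => f (e n)).
Proof. extensionality n; destruct n; reflexivity. Qed.

Lemma sat_pi phi : forall e, (forall n, U (e n)) ->
  (sat M U mem ur (fun n => pi b c (e n)) phi <-> sat M U mem ur e phi).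
Proof.
  induction phi; intros e He; simpl.
  - split; intro H.
    + destruct (pi_mem_inv (e n0) (pi b c (e n)) (U_T _ (He n0)) H) as [y [Hy E]].
      rewrite (pi_inj (e n) y (U_T _ (He n)) (HasT_mem (e n0) y (U_T _ (He n0)) Hy) E); auto.
    + apply pi_mem; auto. apply U_T; auto.
  - apply pi_ur; apply U_T; auto.
  - split; intro H; [apply pi_inj; auto; apply U_T; auto|rewrite H; auto].
  - tauto.
  - rewrite IHphi1, IHphi2 by auto; tauto.
  - rewrite IHphi1, IHphi2 by auto; tauto.
  - rewrite IHphi1, IHphi2 by auto; tauto.
  - assert (He' : forall x, U x -> forall n, U (scons x e n)) by (intros x Hx [|n]; simpl; auto).
    split; intros H x Hx.
    + rewrite <- IHphi by auto. rewrite scons_map. apply H. apply pi_U; auto.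
    + rewrite <- (pi_inv x (U_T x Hx)). rewrite <- scons_map.
      rewrite IHphi; [apply H; apply pi_U; auto|]. apply He'. apply pi_U; auto.
  - assert (He' : forall x, U x -> forall n, U (scons x e n)) by (intros x Hx [|n]; simpl; auto).
    split; intros [x [Hx H]].
    + exists (pi b c x). split; [apply pi_U; auto|].
      rewrite <- IHphi by (apply He'; apply pi_U; auto). rewrite scons_map.
      rewrite (pi_inv x (U_T x Hx)). auto.
    + exists (pi b c x). split; [apply pi_U; auto|].
      rewrite <- scons_map. rewrite IHphi; auto.
Qed.
End Swap.

Lemma ker_bound (e : nat -> M) : (forall n, U (e n)) -> forall N,
  exists K, I K /\ forall n, n < N -> forall a, ur a -> in_TC a (e n) -> mem a K.
Proof.
  intros He N. induction N.
  - destruct I_ex_empty as [o [Ho _]]. exists o. split; auto. intros; lia.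
  - destruct IHN as [K [HK HK']].
    destruct (U_data (e N) (He N)) as [s [k [_ [_ [Hs' [Hk Hsk]]]]]].
    destruct (I_union K k HK Hk) as [K2 [HK2 HK2']].
    exists K2. split; auto. intros n Hn a Ha Hin. apply HK2'.
    destruct (Nat.eq_dec n N) as [->|Hne].
    + right. apply Hsk; auto. apply Hs'; auto.
    + left. apply (HK' n); auto. lia.
Qed.

Lemma inTC_up z u x : mem u x -> in_TC z u -> in_TC z x.
Proof. intros Hu H t Ht Hx. apply (H t Ht). destruct Ht as [_ Ht]. apply (Ht x); auto. Qed.

Definition fo2 (m : nat) := S (S (S (2 * m))).
Definition go2 (n : nat) := match n with 0 => 0 | 1 => 1 | S (S n) => S (S (2 * n)) end.

Lemma mg_fo2 v u e p : (fun m => scons v (scons u (mg e p)) (fo2 m)) = p.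
Proof. extensionality m. change (mg e p (S (2*m)) = p m). apply mg_odd. Qed.
Lemma mg_go2 v u e p : (fun n => scons v (scons u (mg e p)) (go2 n)) = scons v (scons u e).
Proof. extensionality n. destruct n as [|[|n]]; [reflexivity|reflexivity|]. change (mg e p (2*n) = e n). apply mg_even. Qed.

Lemma U_ax_repl : ax_replacement M U mem ur.
Proof.
  intros phi e He x Hx Hfun.
  assert (DR : Def M mem ur (fun E => Ugen (fun m => E (fo2 m)) (E 0) /\
                 sat M (Ugen (fun m => E (fo2 m))) mem ur (fun n => E (go2 n)) phi)).
  { apply Def_and; [apply Def_U|apply Def_satU]. }
  destruct (repl _ DR (mg e eI) x) as [Y [HY HY']].
  { intros u Hu. cbv beta. setoid_rewrite mg_fo2. setoid_rewrite mg_go2.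
    destruct (Hfun u (U_mem x u Hx Hu) Hu) as [v [Hv [Hs Huniq]]].
    exists v. split; [split; auto|]. intros v' [Hv' Hs']. apply Huniq; auto. }
  cbv beta in HY'. setoid_rewrite mg_fo2 in HY'. setoid_rewrite mg_go2 in HY'.
  set (N := fvb phi).
  destruct (ker_bound e He N) as [K1 [HK1 HK1']].
  destruct (U_data x Hx) as [sx [kx [Hsx [Hxsx [Hsx' [Hkx Hsxk]]]]]].
  destruct (I_union kx K1 Hkx HK1) as [K0 [HK0 HK0']].
  assert (Hkey : forall v, mem v Y -> forall a, ur a -> in_TC a v -> mem a K0).
  { intros v Hv a Ha Hav. apply NNPP; intro HaK.
    apply HY' in Hv. destruct Hv as [u [Hux [Uv Hsat]]].
    destruct (U_data v Uv) as [sv [kv [Hsv [Hvsv [Hsv' [Hkv Hsvk]]]]]].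
    destruct (I_union K0 kv HK0 Hkv) as [K2 [HK2 HK2']].
    destruct (classic (exists c, ur c /\ ~ mem c K2)) as [[c [Hc HcK]]|Hno].
    2:{ apply (I_notall K2 (proj1 (I_sets K2 HK2))); auto. intro z. split.
        - apply (I_sets K2 HK2).
        - intro Hz. apply NNPP; intro Hn. apply Hno. exists z; auto. }
    assert (HaK2 : mem a K2) by (apply HK2'; right; apply Hsvk; auto; apply Hsv'; auto).
    assert (Hca : c <> a) by (intro; subst; contradiction).
    assert (Uu : U u) by (apply (U_mem x); auto).
    assert (Hfix : forall y, U y -> (forall z, ur z -> in_TC z y -> mem z K0) -> pi a c y = y).
    { intros y Uy Hy. apply (pi_fix a c y (U_T y Uy)). intros z Hz Hzy. split.
      - intro; subst z. apply HaK. apply Hy; auto.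
      - intro; subst z. apply HcK. apply HK2'. left. apply Hy; auto. }
    assert (Hpu : pi a c u = u).
    { apply Hfix; auto. intros z Hz Hzu. apply HK0'. left. apply Hsxk; auto. apply Hsx'.
      apply (inTC_up z u x); auto. }
    assert (Hpe : forall n, n < N -> pi a c (e n) = e n).
    { intros n Hn. apply Hfix; auto. intros z Hz Hzn. apply HK0'. right. apply (HK1' n); auto. }
    assert (Henv : forall n, U (scons v (scons u e) n)) by (intros [|[|n]]; simpl; auto).
    pose proof (proj2 (sat_pi a c Ha Hc phi _ Henv) Hsat) as Hsat2.
    rewrite (sat_agree _ _ _ _ phi _ (scons (pi a c v) (scons u e))) in Hsat2.
    2:{ intros n Hn. destruct n as [|[|n]]; simpl; auto. apply Hpe. unfold N; lia. }
    destruct (Hfun u Uu Hux) as [v0 [Uv0 [Hs0 Hun]]].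
    assert (Hpv : pi a c v = v).
    { assert (E1 := Hun v Uv Hsat). assert (E2 := Hun (pi a c v) (pi_U a c Ha Hc v Uv) Hsat2). congruence. }
    assert (Hin : in_TC a (pi a c v)) by (rewrite Hpv; auto).
    destruct (pi_ker a c Ha Hc v a (U_T v Uv) Ha Hin) as [z [Hz [Hzv Hsw]]].
    unfold swR in Hsw. destruct Hsw as [[-> ->]|[[-> _]|[H1 [_ H2]]]].
    - apply Hca; auto.
    - apply HcK. apply HK2'. right. apply Hsvk; auto; apply Hsv'; auto.
    - apply H1; auto. }
  assert (DT : Def M mem ur (fun E => ~ ur (E 0) /\ forall y, mem y (E 0) <-> in_TC y (E 1))) by (unf; solve_def).
  destruct (repl _ DT (fun _ => x) Y) as [Z [HZ HZ']].
  { intros v Hv. simpl.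
    assert (Uv : U v) by (apply HY' in Hv; destruct Hv as [u [_ [Uv _]]]; auto).
    destruct (TC_ex v (U_T v Uv)) as [s [[Hs _] [_ Hs']]].
    exists s. split; [split; auto|]. intros s' [Hs2 Hs2']. apply ext; auto. intro y; rewrite Hs2', Hs'; tauto. }
  simpl in HZ'.
  destruct (union Z) as [W [HW HW']].
  assert (HWc : forall y, mem y W <-> exists v, mem v Y /\ in_TC y v).
  { intro y. rewrite HW'. split.
    - intros [s [Hs Hys]]. apply HZ' in Hs. destruct Hs as [v [Hv [_ Hs']]]. exists v. split; auto. apply Hs'; auto.
    - intros [v [Hv Hyv]].
      assert (Uv : U v) by (apply HY' in Hv; destruct Hv as [u [_ [Uv _]]]; auto).
      destruct (TC_ex v (U_T v Uv)) as [s [[Hs _] [_ Hs']]].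
      exists s. split; [apply HZ'; exists v; split; auto|apply Hs'; auto]. }
  exists Y. split; [|split; [exact HY|]].
  - apply (U_build Y W K0); auto.
    + split; auto. intros y u Hy Hu. apply HWc. apply HWc in Hy. destruct Hy as [v [Hv Hyv]].
      exists v. split; auto. apply (inTC_trans v y); auto.
    + intros v Hv. apply HWc. exists v. split; auto. apply inTC_self.
    + intros a Ha HaW. apply HWc in HaW. destruct HaW as [v [Hv Hav]]. apply (Hkey v); auto.
  - intros v Uv. rewrite HY'. split.
    + intros [u [Hu [_ Hs]]]. exists u. split; [apply (U_mem x); auto|]. auto.
    + intros [u [_ [Hu Hs]]]. exists u. auto.
Qed.

Lemma U_ZF : ZFCU_R M U mem ur.
Proof.
  unfold ZFCU_R. split; [apply U_ax_urelements|]. split; [apply U_ax_ext|].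
  split; [apply U_ax_found|]. split; [apply U_ax_pair|]. split; [apply U_ax_union|].
  split; [apply U_ax_power|]. split; [apply U_ax_inf|]. split; [apply U_ax_sep|].
  split; [apply U_ax_repl|]. apply U_ax_choice.
Qed.
End Z.

Theorem mainTheorem10 (M : Type) (mem : M -> M -> Prop) (ur : M -> Prop)
  (phiI : form) (eI : nat -> M) :
  ZFCU_R M (fun _ => True) mem ur ->
  is_A_ideal M mem ur (defined_class mem ur phiI eI) ->
  ZFCU_R M (U_ideal M mem ur (defined_class mem ur phiI eI)) mem ur /\
  A_proper_class M (U_ideal M mem ur (defined_class mem ur phiI eI)) mem ur.
Proof.
  intros ZF Hid. split.
  - apply (U_ZF M mem ur ZF phiI eI Hid).
  - apply (U_proper M mem ur ZF phiI eI Hid).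
Qed.
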